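(* Let $X$ be a pure finite $n$-dimensional simplicial complex. Define $M_{-1}=1$ and, for $0\le k\le n-1$, $M_k=\operatorname{Fill}_k((k+1)M_{k-1}+1)$. Let $0\le k\le n-1$. If $\operatorname{Sys}_j(X)>(j+1)M_{j-1}+1$ for every $0\le j\le k$, then $\operatorname{Crad}_k(X)\le M_k$.
   Context: $X(-1)=\{\emptyset\}$. Over $\mathbb{F}_2$: $C_k(X)$ has basis $X(k)$ (chains identified with subsets, $|A|$ the size), $\partial_k\sigma=\sum_{\tau\subset\sigma,|\tau|=|\sigma|-1}\tau$ (so $\partial_0\{u\}=\emptyset$), $Z_k=\ker\partial_k$, $B_k=\operatorname{Im}\partial_{k+1}$. $\operatorname{Sys}_k(X)=\min\{|A|:A\in Z_k\setminus B_k\}$ ($\infty$ if $Z_k=B_k$). For $B\in B_k$, $\operatorname{Fill}_k(B)=\min\{|A|:A\in C_{k+1},\partial_{k+1}A=B\}$; for $B\in Z_k\setminus B_k$, $\operatorname{Fill}_k(B)=\infty$; $\operatorname{Fill}_k(M)=\max\{\operatorname{Fill}_k(B):B\in Z_k,|B|\le M\}$. Cone function: a $(-1)$-cone function with apex $v$ maps $\emptyset\mapsto\{v\}$; for $k\ge0$ a $k$-cone function with apex $v$ is a linear map $\operatorname{Cone}^v_k:\bigoplus_{j=-1}^kC_j\to\bigoplus_{j=-1}^kC_{j+1}$ (sending $C_j$ into $C_{j+1}$) restricting to a $(k-1)$-cone function with apex $v$ and satisfying $\partial_{k+1}\operatorname{Cone}^v_k(A)=A+\operatorname{Cone}^v_k(\partial_kA)$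 for $A\in C_k$. $\operatorname{Vol}(\operatorname{Cone}^v_k)=\max_{\tau\in X(k)}|\operatorname{Cone}^v_k(\tau)|$; $\operatorname{Crad}_k(X)$ is the minimal volume over all vertices $v$ and all $k$-cone functions with apex $v$ ($\infty$ if none exist). *)

(* Defs.v *)
From mathcomp Require Import all_boot.
Set Implicit Arguments. Unset Strict Implicit. Unset Printing Implicit Defensive.

(* ---------- extended naturals: None = +infinity ---------- *)
Definition ole (a b : option nat) : bool :=
  match a, b with
  | _, None => true
  | None, Some _ => false
  | Some x, Some y => x <= y
  end.
Definition olt (a b : option nat) : bool :=
  match a, b with
  | Some x, Some y => x < y
  | Some _, None => true
  | None, _ => false
  end.
Definition oadd (a b : option nat) : option nat :=
  match a, b with Some x, Some y => Some (x + y) | _, _ => None end.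
(* m * a for a positive natural m (so m * oo = oo) *)
Definition omul (m : nat) (a : option nat) : option nat :=
  match a with Some x => Some (m * x) | None => None end.
Definition omax (a b : option nat) : option nat :=
  match a, b with Some x, Some y => Some (maxn x y) | _, _ => None end.
Definition omin (T : finType) (P : pred T) (f : T -> nat) : option nat :=
  if [pick x | P x] is Some x0 then Some (\big[minn/f x0]_(y | P y) f y)
  else None.

Section Complex.
Variable V : finType.
Implicit Types (X : {set {set V}}) (A B : {set {set V}}) (s t : {set V}).

(* finite simplicial complex (containing the empty face, X(-1) = {emptyset}) *)
Definition simplicial_complex X : Prop :=
  set0 \in X /\ forall s t, s \in X -> t \subset s -> t \in X.

Definition pure_dim X (n : nat) : Prop :=
  (forall s, s \in X -> #|s| <= n.+1) /\
  (forall s, s \in X -> exists2 r, r \in X & (s \subset r) && (#|r| == n.+1)).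

Definition Xk X (k : nat) : {set {set V}} := [set s in X | #|s| == k.+1].

(* F_2-linear extension of a map on basis faces; chains are sets of faces *)
Definition lin (f : {set V} -> {set {set V}}) A : {set {set V}} :=
  [set t : {set V} | odd #|[set s in A | t \in f s]|].

Definition bd1 s : {set {set V}} := [set t : {set V} | (t \subset s) && (#|t|.+1 == #|s|)].
Definition bd A : {set {set V}} := lin bd1 A.

Definition chain X k A : bool := A \subset Xk X k.
Definition cycle X k A : bool := chain X k A && (bd A == set0).
Definition bdry X k A : bool :=
  [exists D : {set {set V}}, chain X k.+1 D && (bd D == A)].

Definition Sys X k : option nat :=
  omin (fun A => cycle X k A && ~~ bdry X k A) (fun A => #|A|).

Definition FillB X k B : option nat :=
  omin (fun A => chain X k.+1 A && (bd A == B)) (fun A => #|A|).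

Definition Fill X k (M : option nat) : option nat :=
  \big[omax/Some 0]_(B | cycle X k B && ole (Some #|B|) M) FillB X k B.

(* Mseq X j = M_{j-1}: M_{-1} = 1, M_k = Fill_k((k+1) M_{k-1} + 1) *)
Fixpoint Mseq X (j : nat) : option nat :=
  match j with
  | 0 => Some 1
  | j'.+1 => Fill X j' (oadd (omul j'.+1 (Mseq X j')) (Some 1))
  end.

(* A k-cone function with apex v, represented (as any linear map) by its
   values on the basis faces of dimensions -1..k; its action on chains is
   [lin c]. *)
Definition is_cone X (k : nat) (v : V) (c : {ffun {set V} -> {set {set V}}}) : bool :=
  [&& [set v] \in X,
      c set0 == [set [set v]],
      [forall s : {set V}, (s \in X) && (#|s| <= k.+1) ==>
          (c s \subset [set r in X | #|r| == #|s|.+1])] &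
      [forall s : {set V}, (s \in X) && (0 < #|s| <= k.+1) ==>
          (bd (c s) == ([set s] :\: lin c (bd [set s])) :|: (lin c (bd [set s]) :\: [set s]))]].

Definition Vol X k (c : {ffun {set V} -> {set {set V}}}) : nat :=
  \max_(t in Xk X k) #|c t|.

Definition Crad X k : option nat :=
  omin (fun p : V * {ffun {set V} -> {set {set V}}} =>
          is_cone X k p.1 p.2)
       (fun p => Vol X k p.2).

End Complex.

(* Main.v *)
Require Import Defs.
From mathcomp Require Import all_boot.
Set Implicit Arguments. Unset Strict Implicit. Unset Printing Implicit Defensive.

Section Aux.
Variable V : finType.
Implicit Types (X : {set {set V}}) (A B : {set {set V}}) (s t : {set V}).

Definition sd A B : {set {set V}} := (A :\: B) :|: (B :\: A).

Lemma in_sd A B t : (t \in sd A B) = (t \in A) (+) (t \in B).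
Proof. by rewrite !inE; case: (t \in A); case: (t \in B). Qed.

Lemma in_lin f A t :
  (t \in lin f A) = odd (\sum_s ((s \in A) * (t \in f s))).
Proof.
rewrite inE.
rewrite -sum1dep_card big_mkcond /=.
by congr odd; apply: eq_bigr => s _; rewrite mulnb; case: (_ && _).
Qed.

Lemma odd_sum_odd (I : finType) (F : I -> nat) :
  odd (\sum_i F i) = odd (\sum_i odd (F i)).
Proof.
apply: (big_ind2 (fun a b => odd a = odd b)) => //.
  by move=> a b c d E1 E2; rewrite !oddD E1 E2.
by move=> i _; rewrite oddb.
Qed.

Lemma odd_sum_eq (I : finType) (F G : I -> nat) :
  (forall i, odd (F i) = odd (G i)) -> odd (\sum_i F i) = odd (\sum_i G i).
Proof. by move=> E; rewrite (odd_sum_odd F) (odd_sum_odd G); congr odd; apply: eq_bigr => i _; rewrite E. Qed.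

Lemma lin_sd f A B : lin f (sd A B) = sd (lin f A) (lin f B).
Proof.
apply/setP => t; rewrite in_sd !in_lin -oddD -big_split /=.
apply: odd_sum_eq => s; rewrite in_sd.
by case: (s \in A); case: (s \in B); case: (t \in f s).
Qed.

Lemma lin_fsd f g A : lin (fun s => sd (f s) (g s)) A = sd (lin f A) (lin g A).
Proof.
apply/setP => t; rewrite in_sd !in_lin -oddD -big_split /=.
apply: odd_sum_eq => s; rewrite in_sd.
by case: (s \in A); case: (t \in f s); case: (t \in g s).
Qed.

Lemma lin_comp f g A : lin g (lin f A) = lin (fun s => lin g (f s)) A.
Proof.
apply/setP => t; rewrite !in_lin.
transitivity (odd (\sum_u \sum_s ((s \in A) * (u \in f s) * (t \in g u)))).
  rewrite odd_sum_odd [RHS]odd_sum_odd; congr odd; apply: eq_bigr => u _.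
  by rewrite in_lin -big_distrl /= oddM [in RHS]oddM !oddb.
rewrite exchange_big /=; apply: odd_sum_eq => s.
rewrite -(eq_bigr _ (fun u _ => mulnA _ _ _)) -big_distrr /= oddM oddb.
by rewrite in_lin oddM !oddb.
Qed.

Lemma lin1 (f : {set V} -> {set {set V}}) s : lin f [set s] = f s.
Proof.
apply/setP => t; rewrite in_lin (bigD1 s) //= big1 ?addn0 ?in_set1 ?eqxx ?mul1n ?oddb //.
by move=> u /negbTE; rewrite in_set1 => ->.
Qed.

Lemma lin0 (f : {set V} -> {set {set V}}) : lin f set0 = set0.
Proof. by apply/setP => t; rewrite in_lin big1 ?inE // => s _; rewrite inE. Qed.

Lemma lin_id A : lin (fun s => [set s]) A = A.
Proof.
apply/setP => t; rewrite in_lin (bigD1 t) //= big1 ?addn0 ?in_set1 ?eqxx ?muln1 ?oddb //.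
by move=> u /negbTE Hu; rewrite in_set1 eq_sym Hu muln0.
Qed.

Lemma eq_lin f g A : (forall s, s \in A -> f s = g s) -> lin f A = lin g A.
Proof.
move=> E; apply/setP => t; rewrite !in_lin; congr odd; apply: eq_bigr => s _.
by case: (boolP (s \in A)) => // /E ->.
Qed.

Lemma lin_sub f A t : t \in lin f A -> exists2 a, a \in A & t \in f a.
Proof.
rewrite inE => H.
have : 0 < #|[set s in A | t \in f s]| by case: #|_| H.
by case/card_gt0P => a; rewrite inE => /andP [] ? ?; exists a.
Qed.

Lemma sd0 A : sd A set0 = A.
Proof. by apply/setP => t; rewrite in_sd inE addbF. Qed.

Lemma card_sd A B : #|sd A B| <= #|A| + #|B|.
Proof.
apply: (leq_trans (subset_leq_card (_ : sd A B \subset A :|: B))).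
  by apply/subsetP => t; rewrite !inE; case: (t \in A); case: (t \in B).
by rewrite cardsU leq_subr.
Qed.

Lemma card_lin f A : #|lin f A| <= \sum_(a in A) #|f a|.
Proof.
apply: (@leq_trans #|\bigcup_(a in A) f a|).
  apply: subset_leq_card; apply/subsetP => t /lin_sub [a Aa ta].
  by apply/bigcupP; exists a.
apply: (big_ind2 (fun (S : {set {set V}}) n => #|S| <= n)) => //.
  by rewrite cards0.
move=> S1 n1 S2 n2 h1 h2; rewrite cardsU.
by apply: leq_trans (leq_subr _ _) (leq_add h1 h2).
Qed.

Lemma bd1_minus s t : t \in bd1 s -> exists2 x, x \in s & t = s :\ x.
Proof.
rewrite inE => /andP [ts /eqP ct].
have : 0 < #|s :\: t| by rewrite cardsD (setIidPr ts) -ct subSnn.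
case/card_gt0P => x; rewrite inE => /andP [xt xs]; exists x => //.
apply/eqP; rewrite eqEcard; apply/andP; split.
  by apply/subsetP => y yt; rewrite !inE ((subsetP ts) y yt) andbT; apply: contraNneq xt => <-.
by move: ct; rewrite (cardsD1 x s) xs add1n => -[->].
Qed.

Lemma card_bd1 s : #|bd1 s| <= #|s|.
Proof.
apply: (leq_trans _ (leq_imset_card (fun x => s :\ x) s)).
apply: subset_leq_card; apply/subsetP => t /bd1_minus [x xs ->].
by apply/imsetP; exists x.
Qed.

Lemma bd1_sub s t : t \in bd1 s -> (t \subset s) /\ #|t|.+1 = #|s|.
Proof. by rewrite inE => /andP [? /eqP]. Qed.

Lemma bdbd s : lin (@bd1 V) (bd1 s) = set0.
Proof.
apply/setP => t; rewrite inE [RHS]inE.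
case: (boolP ((t \subset s) && (#|t|.+2 == #|s|))) => [/andP [ts /eqP ct]|H].
  have -> : [set u in bd1 s | t \in bd1 u] = (fun x => s :\ x) @: (s :\: t).
    apply/setP => u; rewrite inE; apply/andP/imsetP.
      case=> /bd1_minus [x xs ->] /bd1_sub [tsx _]; exists x => //.
      rewrite inE xs andbT; apply/negP => xt.
      by have := (subsetP tsx) x xt; rewrite !inE eqxx.
    case=> x; rewrite inE => /andP [xt xs] ->; split.
  by rewrite inE subD1set /= [#|s|](cardsD1 x s) xs.
    rewrite inE; apply/andP; split.
      apply/subsetP => y yt; rewrite !inE ((subsetP ts) y yt) andbT.
      by apply: contraNneq xt => <-.
    by move: ct; rewrite (cardsD1 x s) xs add1n => -[->].
  rewrite card_in_imset; last first.
    move=> x y; rewrite !inE => /andP[_ xs] /andP[_ ys] /setP /(_ x).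
    by rewrite !inE eqxx xs /= andbT => /esym/negbFE/eqP.
  by rewrite cardsD (setIidPr ts) -ct subSn // subSn // subnn.
rewrite (_ : [set _ in _ | _] = set0) ?cards0 //; apply/setP => u.
rewrite !inE; apply/negP => /andP[/andP[us /eqP cu] /andP[tu /eqP ct]].
by move/negP: H; apply; rewrite (subset_trans tu us) -cu -ct eqxx.
Qed.

Lemma sdd A : sd A A = set0.
Proof. by apply/setP => t; rewrite in_sd addbb inE. Qed.

End Aux.

Lemma bigmin_le (T : finType) (P : pred T) (f : T -> nat) a x :
  P x -> \big[minn/a]_(y | P y) f y <= f x.
Proof.
move=> Px; rewrite -big_filter.
have : x \in [seq y <- index_enum T | P y] by rewrite mem_filter Px mem_index_enum.
elim: [seq y <- index_enum T | P y] => [//|z r IH].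
rewrite in_cons big_cons => /orP [/eqP <-|/IH]; first exact: geq_minl.
exact: leq_trans (geq_minr _ _).
Qed.

Lemma omin_le (T : finType) (P : pred T) (f : T -> nat) x y :
  omin P f = Some y -> P x -> y <= f x.
Proof.
rewrite /omin; case: pickP => [x0 _ [<-]|//]; exact: bigmin_le.
Qed.

Lemma omin_ex (T : finType) (P : pred T) (f : T -> nat) x :
  P x -> exists2 y, P y & omin P f = Some (f y).
Proof.
move=> Px; rewrite /omin; case: pickP => [x0 P0|/(_ x)]; last by rewrite Px.
have : exists2 y, P y & \big[minn/f x0]_(y | P y) f y = f y.
  apply: (big_ind (fun v => exists2 y, P y & v = f y)).
  - by exists x0.
  - move=> a b [ya Pa ->] [yb Pb ->]; rewrite /minn; case: ifP => _.
      by exists ya. by exists yb.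
  - by move=> i Pi; exists i.
by case=> y Py ->; exists y.
Qed.

Lemma ole_omax_l a b : ole a (omax a b).
Proof. by case: a => [x|]; case: b => [y|] //=; rewrite leq_maxl. Qed.

Lemma ole_omax_r a b c : ole a c -> ole a (omax b c).
Proof.
case: a => [x|]; case: b => [y|]; case: c => [z|] //=.
by move=> h; rewrite (leq_trans h (leq_maxr _ _)).
Qed.

Lemma le_bigomax (T : finType) (P : pred T) (F : T -> option nat) i :
  P i -> ole (F i) (\big[omax/Some 0]_(j | P j) F j).
Proof.
move=> Pi; rewrite -big_filter.
have : i \in [seq y <- index_enum T | P y] by rewrite mem_filter Pi mem_index_enum.
elim: [seq y <- index_enum T | P y] => [//|z r IH].
rewrite in_cons big_cons => /orP [/eqP <-|/IH]; first exact: ole_omax_l.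
exact: ole_omax_r.
Qed.

Section Main.
Variable V : finType.
Variable X : {set {set V}}.
Variable v : V.
Hypothesis SC : simplicial_complex X.

Definition Inv j (c : {ffun {set V} -> {set {set V}}}) :=
 [/\ c set0 = [set [set v]],
  forall s, s \in X -> #|s| <= j -> c s \subset [set r in X | #|r| == #|s|.+1],
  forall s, s \in X -> #|s| <= j -> bd (c s) = sd [set s] (lin c (bd1 s)) &
  forall s, s \in X -> #|s| <= j -> ole (Some #|c s|) (Mseq X #|s|)].

Lemma bd1_set0 : bd1 (set0 : {set V}) = set0.
Proof. by apply/setP => t; rewrite !inE cards0 andbF. Qed.

Lemma bd1_set1 : bd1 [set v] = [set set0].
Proof.
apply/setP => t; rewrite !inE cards1 eqSS cards_eq0.
by case: (boolP (t == set0)) => [/eqP ->|]; rewrite ?sub0set ?andbF.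
Qed.

Lemma bd1_in s t : s \in X -> t \in bd1 s -> t \in X /\ #|t|.+1 = #|s|.
Proof.
move=> sX /bd1_sub [ts ct]; split => //; case: SC => _; apply; eassumption.
Qed.

Lemma Inv0 : [set v] \in X -> Inv 0 [ffun _ => [set [set v]]].
Proof.
move=> vX; split.
- by rewrite ffunE.
- move=> s _; rewrite leqn0 => /eqP /cards0_eq ->; rewrite ffunE cards0.
  by apply/subsetP => r; rewrite !inE => /eqP ->; rewrite vX cards1.
- move=> s _; rewrite leqn0 => /eqP /cards0_eq ->; rewrite ffunE.
  by rewrite bd1_set0 lin0 sd0 /bd lin1 bd1_set1.
- move=> s _; rewrite leqn0 => /eqP /cards0_eq ->; rewrite ffunE cards0 cards1 //.
Qed.

Lemma Inv_step j c :
  Inv j c -> olt (oadd (omul j.+1 (Mseq X j)) (Some 1)) (Sys X j) ->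
  exists c', Inv j.+1 c'.
Proof.
case=> c0 csub cbd csz.
case Hm: (Mseq X j) => [m|] //= HS.
pose T s := sd [set s] (lin c (bd1 s)).
have Tcyc : forall s, s \in X -> #|s| = j.+1 -> Defs.cycle X j (T s).
  move=> s sX cs; apply/andP; split.
    apply/subsetP => u; rewrite in_sd.
    case: (boolP (u \in [set s])) => [/set1P -> _|_ /= /lin_sub [t ts ut]].
      by rewrite inE sX cs eqxx.
    have [tX ct] := bd1_in sX ts.
    have tj : #|t| <= j by rewrite -ltnS ct cs.
    by have := (subsetP (csub t tX tj)) u ut; rewrite !inE ct cs.
  rewrite /T /bd lin_sd lin1 lin_comp.
  rewrite (@eq_lin _ _ (fun t => sd [set t] (lin c (bd1 t)))); last first.
    move=> t ts; have [tX ct] := bd1_in sX ts; rewrite -cbd //.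
    by rewrite -ltnS ct cs.
  by rewrite lin_fsd lin_id -lin_comp bdbd lin0 sd0 sdd.
have Tsz : forall s, s \in X -> #|s| = j.+1 -> #|T s| <= j.+1 * m + 1.
  move=> s sX cs; apply: (leq_trans (card_sd _ _)); rewrite cards1 addnC leq_add2r.
  apply: (leq_trans (card_lin _ _)).
  apply: (@leq_trans (\sum_(t in bd1 s) m)).
    apply: leq_sum => t ts; have [tX ct] := bd1_in sX ts.
    have tj : #|t| = j by apply/eqP; rewrite -eqSS ct cs.
    by have := csz t tX; rewrite tj Hm => /(_ (leqnn _)).
  by rewrite sum_nat_const leq_mul2r -cs card_bd1 orbT.
have Tb : forall s, s \in X -> #|s| = j.+1 -> bdry X j (T s).
  move=> s sX cs; apply: contraT => nb.
  have P : Defs.cycle X j (T s) && ~~ bdry X j (T s) by rewrite Tcyc.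
  have [y _ Hy] := @omin_ex _ (fun A : {set {set V}} => Defs.cycle X j A && ~~ bdry X j A) (fun A => #|A|) _ P.
  rewrite /Sys Hy in HS.
  have := leq_trans HS (leq_trans (omin_le Hy P) (Tsz s sX cs)).
  by rewrite ltnn.
have Tf : forall s, s \in X -> #|s| = j.+1 -> exists A,
    chain X j.+1 A && (bd A == T s) && ole (Some #|A|) (Mseq X j.+1).
  move=> s sX cs; have /existsP [D /andP [Dc /eqP DT]] := Tb s sX cs.
  have PD : chain X j.+1 D && (bd D == T s) by rewrite Dc DT eqxx.
  have [A /andP [Ac AT] HA] := @omin_ex _ (fun A : {set {set V}} => chain X j.+1 A && (bd A == T s)) (fun A => #|A|) _ PD.
  exists A; rewrite Ac AT /=.
  change (ole (Some #|A|) (Fill X j (oadd (omul j.+1 (Mseq X j)) (Some 1)))).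
  rewrite Hm /=.
  have := @le_bigomax _ (fun B => Defs.cycle X j B && ole (Some #|B|) (Some (j.+1*m+1))) (FillB X j) (T s).
  by rewrite /FillB HA Tcyc //= Tsz //; apply.
pose c' := [ffun s => if (s \in X) && (#|s| == j.+1) then
   odflt set0 [pick A | chain X j.+1 A && (bd A == T s) && ole (Some #|A|) (Mseq X j.+1)]
   else c s].
have c'P : forall s : {set V}, s \in X -> #|s| = j.+1 ->
    chain X j.+1 (c' s) && (bd (c' s) == T s) && ole (Some #|c' s|) (Mseq X j.+1).
  move=> s sX cs; rewrite ffunE sX cs eqxx /=.
  case: pickP => [A //|none]; have [A HA] := Tf s sX cs.
  by have := none A; rewrite HA.
have c'E : forall s : {set V}, #|s| <= j -> c' s = c s.
  move=> s sj; rewrite ffunE; case: ifP => // /andP [_ /eqP cs].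
  by move: sj; rewrite cs ltnn.
have linE : forall s : {set V}, #|s| <= j.+1 -> lin c' (bd1 s) = lin c (bd1 s).
  move=> s sj; apply: eq_lin => t /bd1_sub [_ ct]; apply: c'E.
  by rewrite -ltnS ct.
exists c'; split.
- by rewrite c'E ?cards0.
- move=> s sX; rewrite leq_eqVlt ltnS => /orP [/eqP cs|sj]; last by rewrite c'E // csub.
  have /andP [/andP [Ac _] _] := c'P s sX cs.
  by move: Ac; rewrite /chain /Xk cs.
- move=> s sX sj; rewrite linE //; move: sj; rewrite leq_eqVlt ltnS => /orP [/eqP cs|sj].
    by have /andP [/andP [_ /eqP ->] _] := c'P s sX cs.
  by rewrite c'E // cbd.
- move=> s sX; rewrite leq_eqVlt ltnS => /orP [/eqP cs|sj]; last by rewrite c'E // csz.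
  by have /andP [_ H] := c'P s sX cs; rewrite cs.
Qed.

End Main.

Theorem proposition4p1 (V : finType) (X : {set {set V}}) (n k : nat) :
  simplicial_complex X -> pure_dim X n ->
  k < n ->
  (forall j, j <= k ->
     olt (oadd (omul j.+1 (Mseq X j)) (Some 1)) (Sys X j)) ->
  ole (Crad X k) (Mseq X k.+1).
Proof.
move=> SC [_ PD] kn HS.
have [v vX] : exists v, [set v] \in X.
  have [r rX /andP [_ /eqP cr]] := PD _ (proj1 SC).
  have /card_gt0P [x xr] : 0 < #|r| by rewrite cr.
  by exists x; case: SC => _; apply; [exact: rX | rewrite sub1set].
have Hc : forall j, j <= k.+1 -> exists c, Inv X v j c.
  elim=> [_|j IH jk]; first by exists [ffun _ => [set [set v]]]; exact: Inv0.
  have [c Ic] := IH (ltnW jk).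
  exact: (Inv_step SC Ic (HS j jk)).
have [c [c0 csub cbd csz]] := Hc k.+1 (leqnn _).
have cone : is_cone X k (v, c).1 (v, c).2.
  rewrite /is_cone /= vX c0 eqxx /=; apply/andP; split.
    by apply/forallP => s; apply/implyP => /andP [sX sk]; apply: csub.
  apply/forallP => s; apply/implyP => /andP [sX /andP [_ sk]].
  by rewrite /bd lin1 -/(bd (c s)) cbd.
rewrite /Crad; case Hy: (omin _ _) => [y|]; last first.
  have [y _] := @omin_ex _ (fun p : V * {ffun {set V} -> {set {set V}}} => is_cone X k p.1 p.2)
    (fun p => Vol X k p.2) _ cone.
  by rewrite Hy.
have yle := omin_le Hy cone.
case HM: (Mseq X k.+1) => [M|] //=.
apply: (leq_trans yle); rewrite /Vol /=; apply/bigmax_leqP => t.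
rewrite inE => /andP [tX /eqP ct].
by have := csz t tX; rewrite ct HM => /(_ (leqnn _)); apply.
Qed.
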